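(* Let $\mathcal P=(S_1,\dots,S_n)$ be a partition of $V(G)$ into sets of size $r$ and $T=T_{\vec B,\mathcal P}$. For every $j\in\{1,\dots,n\}$ and $v\in S_j$, with $\xi_v=\sigma_T(v)f_v(T\cap\mathcal N(v))$, $$\big|\mathbb E\big[\xi_v\mid B_1,\dots,B_{j-1},B_{j+1},\dots,B_n\big]\big|\le\frac{pq}{r(r-1)}\sum_{w\in S_j\setminus\{v\}}W_v(w).$$
   Context: Let $n,p,q$ be positive integers, $r=p+q$, $G$ a finite simple graph with $|V(G)|=rn$; $\mathcal N(v)$ neighbor set. For each $v$, $f_v:2^{\mathcal N(v)}\to\mathbb R$ with $f_v(\emptyset)=0$. $\sigma_T(v)=q$ if $v\in T$, $-p$ otherwise. Weight of $w$ on $v$: $W_v(w)=\sup_{A\subseteq\mathcal N(v)\setminus\{w\}}|f_v(A)-f_v(A\cup\{w\})|$ if $w\in\mathcal N(v)$, and $0$ otherwise. Restricted randomization: $S_i=\{w_i^1,\dots,w_i^r\}$, $B_1,\dots,B_n$ i.i.d. uniform $p$-subsets of $\{1,\dots,r\}$, $T_{\vec B,\mathcal P}=\{w_i^j:j\in B_i\}$. *)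

(* Defs.v *)
From HB Require Import structures.
From mathcomp Require Import all_boot all_order all_algebra.
Set Implicit Arguments. Unset Strict Implicit. Unset Printing Implicit Defensive.
Import Order.TTheory GRing.Theory Num.Theory.
Local Open Scope ring_scope.

Section Defs.
Variables (R : realFieldType) (V : finType).

Definition nbhd (e : rel V) (v : V) : {set V} := [set w | e v w].

(* weight W_v(w): the sup over A ⊆ N(v)\{w} (a finite max of nonnegatives) *)
Definition weight (e : rel V) (f : V -> {set V} -> R) (v w : V) : R :=
  if w \in nbhd e v then
    \big[Num.max/0]_(A : {set V} | A \subset nbhd e v :\ w)
        `|f v A - f v (w |: A)|
  else 0.

Definition sigma (p q : nat) (T : {set V}) (v : V) : R :=
  if v \in T then q%:R else - p%:R.

(* T_{B,P} = { w_i^k : k in B_i }, with P i k = w_i^k *)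
Definition T_of (n r : nat) (P : 'I_n -> 'I_r -> V) (B : 'I_n -> {set 'I_r})
  : {set V} :=
  [set x | [exists i : 'I_n, exists k : 'I_r, (k \in B i) && (x == P i k)]].

Definition xi (p q : nat) (e : rel V) (f : V -> {set V} -> R) (T : {set V})
  (v : V) : R := sigma p q T v * f v (T :&: nbhd e v).

Definition upd (n r : nat) (B : 'I_n -> {set 'I_r}) (j : 'I_n) (X : {set 'I_r})
  : 'I_n -> {set 'I_r} := fun i => if i == j then X else B i.

(* E[xi_v | B_i, i <> j]: average over the uniform p-subset B_j *)
Definition condE (p q n : nat) (e : rel V) (f : V -> {set V} -> R)
  (P : 'I_n -> 'I_(p + q) -> V) (B : 'I_n -> {set 'I_(p + q)}) (j : 'I_n)
  (v : V) : R :=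
  (\sum_(X : {set 'I_(p + q)} | #|X| == p)
      xi p q e f (T_of P (upd B j X)) v) / ('C(p + q, p))%:R.
End Defs.

(* Main.v *)
Require Import Defs.
From HB Require Import structures.
From mathcomp Require Import all_boot all_order all_algebra.
From mathcomp Require Import ring zify.
Import Order.TTheory GRing.Theory Num.Theory.
Local Open Scope ring_scope.
Lemma T_add (V : finType) n r (P : 'I_n -> 'I_r -> V) B j a Y :
  T_of P (upd B j (a |: Y)) = P j a |: T_of P (upd B j Y).
Proof.
apply/setP => x; rewrite /T_of !inE.
apply/existsP/idP.
- case=> i /existsP [k' /andP[hk /eqP ->]]; rewrite /upd in hk.
  case: eqP hk => [-> | ne] hk.
    rewrite in_setU1 in hk; case/orP: hk => [/eqP -> | hk]; first by rewrite eqxx.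
    apply/orP; right; apply/existsP; exists j; apply/existsP; exists k'.
    by rewrite /upd eqxx hk eqxx.
  apply/orP; right; apply/existsP; exists i; apply/existsP; exists k'.
  by rewrite /upd; case: eqP => // _; rewrite hk eqxx.
- case/orP => [/eqP -> | /existsP [i /existsP [k' /andP[hk hx]]]].
    by exists j; apply/existsP; exists a; rewrite /upd eqxx setU11 eqxx.
  exists i; apply/existsP; exists k'; rewrite hx andbT.
  move: hk; rewrite /upd; case: eqP => // _ hk; by rewrite in_setU1 hk orbT.
Qed.

Lemma T_in (V : finType) n r (P : 'I_n -> 'I_r -> V)
  (hP : injective (fun x : 'I_n * 'I_r => P x.1 x.2)) B j a Y :
  (P j a \in T_of P (upd B j Y)) = (a \in Y).
Proof.
rewrite /T_of inE; apply/existsP/idP.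
- case=> i /existsP [k' /andP[hk /eqP e]].
  have [ei ek] : (j, a) = (i, k') by apply: hP.
  by move: hk; rewrite -ei -ek /upd eqxx.
- move=> hY; exists j; apply/existsP; exists a; by rewrite /upd eqxx hY eqxx.
Qed.

Lemma L (R : realFieldType) (I : finType) (a b : I) (m : nat) (g : {set I} -> R) :
  a != b ->
  \sum_(Y in [set Y : {set I} | (Y \subset ~: [set a; b]) && (#|Y| == m)]) g (a |: Y)
  = \sum_(X : {set I} | (#|X| == m.+1) && (a \in X) && (b \notin X)) g X.
Proof.
move=> ab.
rewrite -big_imset; last first.
  move=> Y1 Y2; rewrite !inE => /andP[s1 _] /andP[s2 _] E.
  have n1 : a \notin Y1 by apply/negP => /(subsetP s1); rewrite !inE eqxx.
  have n2 : a \notin Y2 by apply/negP => /(subsetP s2); rewrite !inE eqxx.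
  by rewrite -(setU1K n1) E setU1K.
apply: eq_bigl => X; apply/imsetP/idP.
- case=> Y; rewrite inE => /andP[sY /eqP cY] ->.
  have nY : a \notin Y by apply/negP => /(subsetP sY); rewrite !inE eqxx.
  have nbY : b \notin Y by apply/negP => /(subsetP sY); rewrite !inE eqxx orbT.
  rewrite cardsU1 nY cY setU11 !in_setU1 (negbTE nbY) orbF /=.
  by rewrite (eq_sym b) ab !andbT; apply/eqP.
- move=> /andP[/andP[/eqP cX aX] bX]; exists (X :\ a); last by rewrite setD1K.
  rewrite inE; apply/andP; split.
    apply/subsetP => x; rewrite !inE => /andP[xa xX]; rewrite negb_or xa /=.
    by apply/negP => /eqP xb; move: bX; rewrite -xb xX.
  by apply/eqP; move: cX; rewrite (cardsD1 a) aX add1n => -[].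
Qed.

Lemma hk_eq (V : finType) (e : rel V) (e_irr : irreflexive e) n r
  (P : 'I_n -> 'I_r -> V) (B : 'I_n -> {set 'I_r}) (j : 'I_n) (k : 'I_r) (Y : {set 'I_r}) :
  T_of P (upd B j (k |: Y)) :&: nbhd e (P j k) = T_of P (upd B j Y) :&: nbhd e (P j k).
Proof.
rewrite T_add; apply/setP => x; rewrite !in_setI in_setU1.
case: (eqVneq x (P j k)) => [->|] //=.
by rewrite /nbhd inE e_irr !andbF.
Qed.

Lemma wbound (R : realFieldType) (V : finType) (e : rel V)
  (f : V -> {set V} -> R) n r
  (P : 'I_n -> 'I_r -> V)
  (hP : injective (fun x : 'I_n * 'I_r => P x.1 x.2)) (B : 'I_n -> {set 'I_r})
  (j : 'I_n) (k w : 'I_r) (Y : {set 'I_r}) :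
  w \notin Y ->
  `|f (P j k) (T_of P (upd B j Y) :&: nbhd e (P j k))
    - f (P j k) (T_of P (upd B j (w |: Y)) :&: nbhd e (P j k))|
  <= weight e f (P j k) (P j w) :> R.
Proof.
move=> wY; rewrite T_add /weight.
set T := T_of P (upd B j Y); set N := nbhd e (P j k).
have wT : P j w \notin T by rewrite /T T_in.
case: ifP => Hn.
- set A := T :&: N.
  have -> : (P j w |: T) :&: N = P j w |: A.
    apply/setP => x; rewrite !in_setI !in_setU1 in_setI.
    by case: (eqVneq x (P j w)) => [->|] //=; rewrite Hn.
  rewrite (bigD1 A) /=; first by rewrite le_max lexx.
  apply/subsetP => x; rewrite in_setI in_setD1 => /andP[xT xN]; rewrite xN andbT.
  by apply/eqP => xw; move: wT; rewrite -xw xT.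
- have -> : (P j w |: T) :&: N = T :&: N.
    apply/setP => x; rewrite !in_setI !in_setU1.
    by case: (eqVneq x (P j w)) => [->|] //=; rewrite Hn (negbTE wT).
  by rewrite subrr normr0.
Qed.

Lemma binid p q : (0 < p)%N -> (0 < q)%N ->
  ('C((p + q).-2, p.-1) * ((p + q) * (p + q).-1) = 'C(p + q, p) * (p * q))%N.
Proof.
case: p => // p; case: q => // q _ _.
have E1 := mul_bin_diag (p.+1 + q.+1) p.
have E2 := mul_bin_down (p.+1 + q.+1).-1 p.
have H3 : ((p.+1 + q.+1).-1 - p = q.+1)%N by rewrite addSn /= addKn.
rewrite H3 in E2.
rewrite [p.+1.-1]/=.
move: E1 E2; set r := (p.+1 + q.+1); set r1 := r.-1.
set a := 'C(r.-2, p); set b := 'C(r1, p); set c := 'C(r, p.+1) => E1 E2.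
rewrite mulnCA (mulnC a) E2 mulnCA E1; ring.
Qed.

Lemma exch (R : realFieldType) (I : finType) (c : pred I) (P1 : pred {set I})
  (Q : {set I} -> I -> bool) (g : {set I} -> R) :
  \sum_(w | c w) \sum_(X | P1 X && Q X w) g X
  = \sum_(X | P1 X) g X *+ #|[set w | c w && Q X w]|.
Proof.
rewrite (exchange_big_dep P1) /=; last by move=> w X _ /andP[].
apply: eq_bigr => X HX; rewrite -sumr_const; apply: eq_bigl => w.
by rewrite inE HX.
Qed.

Theorem mainTheorem15 (R : realFieldType) (n p q : nat)
  (V : finType) (e : rel V)
  (hn : (0 < n)%N) (hp : (0 < p)%N) (hq : (0 < q)%N)
  (e_sym : symmetric e) (e_irr : irreflexive e)
  (hV : #|V| = ((p + q) * n)%N)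
  (f : V -> {set V} -> R) (hf0 : forall v, f v set0 = 0)
  (P : 'I_n -> 'I_(p + q) -> V)
  (hP : injective (fun x : 'I_n * 'I_(p + q) => P x.1 x.2))
  (j : 'I_n) (k : 'I_(p + q))
  (B : 'I_n -> {set 'I_(p + q)})
  (hB : forall i, i != j -> #|B i| = p) :
  `|condE e f P B j (P j k)|
    <= ((p * q)%:R / ((p + q) * (p + q).-1)%:R)
       * \sum_(k' : 'I_(p + q) | k' != k) weight e f (P j k) (P j k').
Proof.
set v := P j k.
pose h (X : {set 'I_(p + q)}) := f v (T_of P (upd B j X) :&: nbhd e v).
pose D (w : 'I_(p + q)) :=
  [set Y : {set 'I_(p + q)} | (Y \subset ~: [set k; w]) && (#|Y| == p.-1)].
set S := \sum_(X : {set 'I_(p + q)} | #|X| == p) xi p q e f (T_of P (upd B j X)) v.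
have HS : S = \sum_(w | w != k) \sum_(Y in D w) (h (k |: Y) - h (w |: Y)).
  have F1 : forall w, w != k -> \sum_(Y in D w) h (k |: Y)
      = \sum_(X : {set 'I_(p + q)} | (#|X| == p) && (k \in X) && (w \notin X)) h X.
    by move=> w wk; rewrite L ?prednK // eq_sym.
  have F2 : forall w, w != k -> \sum_(Y in D w) h (w |: Y)
      = \sum_(X : {set 'I_(p + q)} | ((#|X| == p) && (k \notin X)) && (w \in X)) h X.
    move=> w wk; rewrite /D setUC L //; apply: eq_bigl => X.
    by rewrite prednK // andbAC.
  under eq_bigr => w wk do rewrite sumrB F1 // F2 //.
  rewrite sumrB.
  rewrite (@exch R _ (fun w => w != k) (fun X => (#|X| == p) && (k \in X)) (fun X w => w \notin X)).
  rewrite (@exch R _ (fun w => w != k) (fun X => (#|X| == p) && (k \notin X)) (fun X w => w \in X)).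
  rewrite /S [LHS](bigID (fun X : {set 'I_(p + q)} => k \in X)) /=.
  congr (_ + _).
    apply: eq_bigr => X /andP[/eqP cX kX].
    rewrite /xi /sigma T_in // kX mulr_natl; congr (_ *+ _).
    have -> : [set w | (w != k) && (w \notin X)] = ~: X.
      apply/setP => w; rewrite !inE; case: (eqVneq w k) => [->|] //=.
      by rewrite kX.
    by have := cardsC X; rewrite card_ord cX => /eqP; rewrite eqn_add2l => /eqP.
  rewrite -sumrN; apply: eq_bigr => X /andP[/eqP cX kX].
  rewrite /xi /sigma T_in // (negbTE kX) mulNr mulr_natl; congr (- (_ *+ _)).
  have -> : [set w | (w != k) && (w \in X)] = X.
    apply/setP => w; rewrite !inE; case: (eqVneq w k) => [->|] //=.
    by rewrite (negbTE kX).
  by [].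
have HD : forall w, w != k -> #|D w| = 'C((p + q).-2, p.-1).
  move=> w wk; rewrite /D cards_draws; congr 'C(_, _).
  have := cardsC [set k; w]; rewrite cards2 card_ord (eq_sym k) wk => H.
  move: H; set x := #|_|; rewrite /=; lia.
have HB : `|S| <= 'C((p + q).-2, p.-1)%:R *
     \sum_(k' : 'I_(p + q) | k' != k) weight e f (P j k) (P j k').
  rewrite HS; apply: le_trans (ler_norm_sum _ _ _) _.
  rewrite mulr_sumr; apply: ler_sum => w wk.
  apply: le_trans (ler_norm_sum _ _ _) _.
  have Hs : \sum_(Y in D w) `|h (k |: Y) - h (w |: Y)| <=
            \sum_(Y in D w) weight e f (P j k) (P j w).
    apply: ler_sum => Y; rewrite inE => /andP[sY _].
    have wY : w \notin Y by apply/negP => /(subsetP sY); rewrite !inE eqxx orbT.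
    by rewrite /h hk_eq //; apply: wbound.
  apply: le_trans Hs _.
  by rewrite sumr_const HD // mulr_natl.
have hr : (1 < p + q)%N by rewrite -(addn1 1) leq_add.
have Dnz : ((p + q) * (p + q).-1)%:R != 0 :> R.
  by rewrite pnatr_eq0 muln_eq0 negb_or -!lt0n ltnW //= -ltnS prednK // ltnW.
have Cgt : (0 : R) < ('C(p + q, p))%:R by rewrite ltr0n bin_gt0 leq_addr.
have Ecoef : (p * q)%:R / ((p + q) * (p + q).-1)%:R * ('C(p + q, p))%:R
             = ('C((p + q).-2, p.-1))%:R :> R.
  apply: (mulIf Dnz); rewrite mulrAC (divfK Dnz) -!natrM mulnC -binid //.
rewrite /condE -/S normrM normfV normr_nat ler_pdivrMr //.
by rewrite mulrAC Ecoef.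
Qed.
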